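(* Let $\Omega\subset\mathbb{R}^d$ be a bounded domain, $\kappa\in L^\infty(\Omega)$ with $\kappa\ge\kappa_0>0$, $a(u,v)=\int_\Omega\kappa\nabla u\cdot\nabla v\,dx$, $\|u\|_a^2=a(u,u)$. Let $V_{H,1},V_{H,2}\subset H^1_0(\Omega)$ be finite-dimensional, $L^2(\Omega)$-orthogonal subspaces, $\tau>0$, $N\ge2$. Let $u_{H,1}^n\in V_{H,1}$, $u_{H,2}^n\in V_{H,2}$ ($n=0,\dots,N$) satisfy for $n=1,\dots,N-1$ the scheme $$(u_{H,1}^{n+1}-2u_{H,1}^n+u_{H,1}^{n-1},w)+\frac{\tau^2}{2}a(u_{H,1}^{n+1}+u_{H,1}^{n-1}+2u_{H,2}^n,w)=0\quad\forall w\in V_{H,1},$$ $$(u_{H,2}^{n+1}-2u_{H,2}^n+u_{H,2}^{n-1},w)+\frac{\tau^2}{2}a(u_{H,1}^{n+1}+u_{H,1}^{n-1}+2u_{H,2}^n,w)=0\quad\forall w\in V_{H,2}.$$ Define $(u,v)_{m_\tau}=(u,v)+\frac{\tau^2}{2}a(u,v)$, $\|v\|_{m_\tau}^2=(v,v)_{m_\tau}$; operators $b_\tau:V_{H,1}\to V_{H,1}$, $c_\tau,d_\tau:V_{H,1}+V_{H,2}\to V_{H,1}$ by $(b_\tau(v_1),v)_{m_\tau}=(v_1,v)$, $(c_\tau(u),v)_{m_\tau}=\frac{\tau^2}{2}a(u,v)$, $a(d_\tau(u),v)=a(u,v)$ for all $v\in V_{H,1}$; $\|v_1\|_{s_\tau}^2=\|v_1\|^2-\|b_\tau(v_1)\|_{m_\tau}^2$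 for $v_1\in V_{H,1}$; and $\|v_2\|_{n_\tau}^2=\frac{\tau^2}{2}\|v_2\|_a^2-\|c_\tau(v_2)\|_{m_\tau}^2-\|d_\tau(v_2)\|_{s_\tau}^2$ for $v_2\in V_{H,2}$. Let $$E^{n+\frac12}=\|b_\tau(u_{H,1}^{n+1})-c_\tau(u_{H,2}^{n+1})-b_\tau(u_{H,1}^n)+c_\tau(u_{H,2}^n)\|_{m_\tau}^2+\|u_{H,2}^{n+1}-u_{H,2}^n\|^2-\frac{\tau^2}{2}\|u_{H,2}^{n+1}-u_{H,2}^n\|_a^2$$ $$+\|u_{H,1}^{n+1}+d_\tau(u_{H,2}^{n+1})\|_{s_\tau}^2+\|u_{H,2}^{n+1}\|_{n_\tau}^2+\|u_{H,1}^n+d_\tau(u_{H,2}^n)\|_{s_\tau}^2+\|u_{H,2}^n\|_{n_\tau}^2.$$ Then $E^{n+\frac12}=E^{n-\frac12}$ for $n=1,\dots,N-1$, and the scheme is stable provided $\sup_{v\in V_{H,2}}\frac{\|v\|_a^2}{\|v\|^2}\le\frac{2}{\tau^2}$: in that case each of the terms in $E^{n+\frac12}$ (grouping $\|u_{H,2}^{n+1}-u_{H,2}^n\|^2-\frac{\tau^2}{2}\|u_{H,2}^{n+1}-u_{H,2}^n\|_a^2$ as one term) is nonnegative and hence bounded by $E^{\frac12}$ for all $n=0,\dots,N-1$.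
   Context: $(\cdot,\cdot)$ and $\|\cdot\|$ denote the $L^2(\Omega)$ inner product and norm. The scheme is the $\omega=0$ variant of the partially explicit splitting for the wave equation $u_{tt}=\nabla\cdot(\kappa\nabla u)$ with homogeneous Dirichlet boundary conditions, written under $L^2$-orthogonality of $V_{H,1}$ and $V_{H,2}$. *)

(* Defs.v *)
From HB Require Import structures.
From mathcomp Require Import all_boot all_order all_algebra.
From mathcomp Require Import reals.
Set Implicit Arguments. Unset Strict Implicit. Unset Printing Implicit Defensive.
Import Order.TTheory GRing.Theory Num.Theory.
Local Open Scope ring_scope.

Definition sym_bilinear (R : realType) (V : vectType R) (f : V -> V -> R) :=
  (forall x y, f x y = f y x) /\
  (forall (k : R) (x y z : V), f (k *: x + y) z = k * f x z + f y z).

Definition pos_def (R : realType) (V : vectType R) (f : V -> V -> R) :=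
  forall x : V, x != 0 -> 0 < f x x.

Definition mtau (R : realType) (V : vectType R) (l2 a : V -> V -> R) (tau : R)
  (u v : V) : R := l2 u v + tau ^+ 2 / 2 * a u v.

Definition ssq (R : realType) (V : vectType R) (l2 a : V -> V -> R) (tau : R)
  (b : V -> V) (v : V) : R := l2 v v - mtau l2 a tau (b v) (b v).

Definition nsq (R : realType) (V : vectType R) (l2 a : V -> V -> R) (tau : R)
  (b c d : V -> V) (v : V) : R :=
  tau ^+ 2 / 2 * a v v - mtau l2 a tau (c v) (c v) - ssq l2 a tau b (d v).

Definition Eterm1 (R : realType) (V : vectType R) (l2 a : V -> V -> R) (tau : R)
  (b c : V -> V) (u1 u2 : nat -> V) (n : nat) : R :=
  let w := b (u1 n.+1) - c (u2 n.+1) - b (u1 n) + c (u2 n) in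
  mtau l2 a tau w w.

Definition Eterm2 (R : realType) (V : vectType R) (l2 a : V -> V -> R) (tau : R)
  (u2 : nat -> V) (n : nat) : R :=
  let dl := u2 n.+1 - u2 n in l2 dl dl - tau ^+ 2 / 2 * a dl dl.

Definition Eterm3 (R : realType) (V : vectType R) (l2 a : V -> V -> R) (tau : R)
  (b d : V -> V) (u1 u2 : nat -> V) (n : nat) : R :=
  ssq l2 a tau b (u1 n.+1 + d (u2 n.+1)).

Definition Eterm4 (R : realType) (V : vectType R) (l2 a : V -> V -> R) (tau : R)
  (b c d : V -> V) (u2 : nat -> V) (n : nat) : R :=
  nsq l2 a tau b c d (u2 n.+1).

Definition Eterm5 (R : realType) (V : vectType R) (l2 a : V -> V -> R) (tau : R)
  (b d : V -> V) (u1 u2 : nat -> V) (n : nat) : R :=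
  ssq l2 a tau b (u1 n + d (u2 n)).

Definition Eterm6 (R : realType) (V : vectType R) (l2 a : V -> V -> R) (tau : R)
  (b c d : V -> V) (u2 : nat -> V) (n : nat) : R :=
  nsq l2 a tau b c d (u2 n).

(* energy n = E^{n+1/2} *)
Definition energy (R : realType) (V : vectType R) (l2 a : V -> V -> R) (tau : R)
  (b c d : V -> V) (u1 u2 : nat -> V) (n : nat) : R :=
  Eterm1 l2 a tau b c u1 u2 n + Eterm2 l2 a tau u2 n + Eterm3 l2 a tau b d u1 u2 n
  + Eterm4 l2 a tau b c d u2 n + Eterm5 l2 a tau b d u1 u2 n
  + Eterm6 l2 a tau b c d u2 n.

(* Main.v *)
Require Import Defs.
From HB Require Import structures.
From mathcomp Require Import all_boot all_order all_algebra.
From mathcomp Require Import reals.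
From mathcomp Require Import ring lra zify.
Import Order.TTheory GRing.Theory Num.Theory.
Set Implicit Arguments. Unset Strict Implicit.
Local Open Scope ring_scope.

Section Bil.
Context (R : realType) (V : vectType R) (f : V -> V -> R) (Hf : sym_bilinear f).

Lemma bilDl x y z : f (x + y) z = f x z + f y z.
Proof. by have := Hf.2 1 x y z; rewrite scale1r mul1r. Qed.
Lemma bil0l z : f 0 z = 0.
Proof. have := bilDl 0 0 z; rewrite addr0 => /eqP; rewrite -subr_eq0 => /eqP.
by rewrite opprD addrA subrr sub0r => /eqP; rewrite oppr_eq0 => /eqP. Qed.
Lemma bilZl k x z : f (k *: x) z = k * f x z.
Proof. by have := Hf.2 k x 0 z; rewrite addr0 bil0l addr0. Qed.
Lemma bilNl x z : f (- x) z = - f x z.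
Proof. by rewrite -scaleN1r bilZl mulN1r. Qed.
Lemma bilDr x y z : f z (x + y) = f z x + f z y.
Proof. by rewrite Hf.1 bilDl !(Hf.1 z). Qed.
Lemma bilZr k x z : f z (k *: x) = k * f z x.
Proof. by rewrite Hf.1 bilZl (Hf.1 z). Qed.
Lemma bilNr x z : f z (- x) = - f z x.
Proof. by rewrite Hf.1 bilNl (Hf.1 z). Qed.
Lemma bil0r z : f z 0 = 0.
Proof. by rewrite Hf.1 bil0l. Qed.
End Bil.

Lemma msym (R : realType) (V : vectType R) (l2 a : V -> V -> R) tau :
  sym_bilinear l2 -> sym_bilinear a -> sym_bilinear (mtau l2 a tau).
Proof.
move=> H1 H2; split=> [x y|k x y z]; rewrite /mtau.
  by rewrite H1.1 H2.1.
rewrite H1.2 H2.2; ring.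
Qed.

Ltac expand H := rewrite ?(bilDl H, bilDr H, bilNl H, bilNr H, bilZl H, bilZr H).
Ltac expandin H G := rewrite ?(bilDl H, bilDr H, bilNl H, bilNr H, bilZl H, bilZr H) in G.

Unset Implicit Arguments. Set Strict Implicit.

Theorem mainTheorem4 (R : realType) (V : vectType R)
  (l2 a : V -> V -> R)
  (Hl2 : sym_bilinear l2) (Hl2pd : pos_def l2)
  (Ha : sym_bilinear a) (Hapd : pos_def a)
  (V1 V2 : {vspace V})
  (Horth : forall x y, x \in V1 -> y \in V2 -> l2 x y = 0)
  (tau : R) (Htau : 0 < tau) (N : nat) (HN : (2 <= N)%N)
  (b c d : V -> V)
  (Hb : forall v1, v1 \in V1 ->
        b v1 \in V1 /\ forall v, v \in V1 -> mtau l2 a tau (b v1) v = l2 v1 v)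
  (Hc : forall u, u \in (V1 + V2)%VS ->
        c u \in V1 /\ forall v, v \in V1 -> mtau l2 a tau (c u) v = tau ^+ 2 / 2 * a u v)
  (Hd : forall u, u \in (V1 + V2)%VS ->
        d u \in V1 /\ forall v, v \in V1 -> a (d u) v = a u v)
  (u1 u2 : nat -> V)
  (Hu1 : forall n, (n <= N)%N -> u1 n \in V1)
  (Hu2 : forall n, (n <= N)%N -> u2 n \in V2)
  (Hs1 : forall n, (1 <= n)%N -> (n <= N - 1)%N -> forall w, w \in V1 ->
     l2 (u1 n.+1 - 2%:R *: u1 n + u1 n.-1) w
     + tau ^+ 2 / 2 * a (u1 n.+1 + u1 n.-1 + 2%:R *: u2 n) w = 0)
  (Hs2 : forall n, (1 <= n)%N -> (n <= N - 1)%N -> forall w, w \in V2 ->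
     l2 (u2 n.+1 - 2%:R *: u2 n + u2 n.-1) w
     + tau ^+ 2 / 2 * a (u1 n.+1 + u1 n.-1 + 2%:R *: u2 n) w = 0) :
  (forall n, (1 <= n)%N -> (n <= N - 1)%N ->
     energy l2 a tau b c d u1 u2 n = energy l2 a tau b c d u1 u2 n.-1)
  /\
  ((forall v, v \in V2 -> a v v <= 2 / tau ^+ 2 * l2 v v) ->
   forall n, (n <= N - 1)%N ->
     let E0 := energy l2 a tau b c d u1 u2 0 in
     ((0 <= Eterm1 l2 a tau b c u1 u2 n <= E0) /\
         (0 <= Eterm2 l2 a tau u2 n <= E0) /\
         (0 <= Eterm3 l2 a tau b d u1 u2 n <= E0) /\
         (0 <= Eterm4 l2 a tau b c d u2 n <= E0) /\
         (0 <= Eterm5 l2 a tau b d u1 u2 n <= E0) /\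
         (0 <= Eterm6 l2 a tau b c d u2 n <= E0))).
Proof.
have ht : 0 < tau ^+ 2 / 2 by rewrite divr_gt0 // exprn_gt0.
have Hm := msym tau Hl2 Ha.
have inS : forall x, x \in V1 -> x \in (V1 + V2)%VS.
  by move=> x Hx; apply: (subvP (addvSl V1 V2)).
have inS2 : forall x, x \in V2 -> x \in (V1 + V2)%VS.
  by move=> x Hx; apply: (subvP (addvSr V1 V2)).
have l2pos : forall x, 0 <= l2 x x.
  move=> x; have [->|nz] := eqVneq x 0; first by rewrite (bil0l Hl2).
  exact: ltW (Hl2pd _ nz).
have apos : forall x, 0 <= a x x.
  move=> x; have [->|nz] := eqVneq x 0; first by rewrite (bil0l Ha).
  exact: ltW (Hapd _ nz).
have mpos : forall x, 0 <= mtau l2 a tau x x.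
  by move=> x; rewrite /mtau; apply: addr_ge0; [exact: l2pos | exact: mulr_ge0 (ltW ht) (apos x)].
have uniq0 : forall x, x \in V1 ->
    (forall v, v \in V1 -> mtau l2 a tau x v = 0) -> x = 0.
  move=> x Hx H; apply/eqP; apply/negPn/negP => nz.
  have := H x Hx; rewrite /mtau => h.
  have : 0 < l2 x x + tau ^+ 2 / 2 * a x x.
    by apply: ltr_wpDr; [exact: mulr_ge0 (ltW ht) (apos x) | exact: Hl2pd].
  by rewrite h ltxx.
have cV1 : forall x, x \in V1 -> c x = x - b x.
  move=> x Hx; apply/eqP; rewrite -subr_eq0; apply/eqP; apply: uniq0.
    by rewrite rpredB ?(Hc x (inS x Hx)).1 // rpredB // (Hb x Hx).1.
  move=> v Hv; rewrite !(bilDl Hm, bilNl Hm) (Hc x (inS x Hx)).2 //.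
  by rewrite (Hb x Hx).2 // /mtau; ring.
have cV2 : forall q, q \in V2 -> c q = d q - b (d q).
  move=> q Hq; have He := (Hd q (inS2 q Hq)).1.
  rewrite -cV1 //; apply/eqP; rewrite -subr_eq0; apply/eqP; apply: uniq0.
    by rewrite rpredB ?(Hc q (inS2 q Hq)).1 ?(Hc _ (inS _ He)).1.
  move=> v Hv; rewrite !(bilDl Hm, bilNl Hm) (Hc q (inS2 q Hq)).2 //.
  by rewrite (Hc _ (inS _ He)).2 // (Hd q (inS2 q Hq)).2 // subrr.
have bD : forall x y, x \in V1 -> y \in V1 -> b (x + y) = b x + b y.
  move=> x y Hx Hy; have Hxy : x + y \in V1 by rewrite rpredD.
  apply/eqP; rewrite -subr_eq0; apply/eqP; apply: uniq0.
    by rewrite rpredB ?rpredD ?(Hb _ Hxy).1 ?(Hb _ Hx).1 ?(Hb _ Hy).1.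
  move=> v Hv; rewrite !(bilDl Hm, bilNl Hm) (Hb _ Hxy).2 // (Hb _ Hx).2 //.
  by rewrite (Hb _ Hy).2 // (bilDl Hl2); ring.
have nsqE : forall q, q \in V2 ->
    nsq l2 a tau b c d q = tau ^+ 2 / 2 * (a q q - a (d q) (d q)).
  move=> q Hq; have He := (Hd q (inS2 q Hq)).1.
  rewrite /nsq /ssq cV2 //.
  expand Hm.
  rewrite (Hm.1 (d q) (b (d q))) (Hb _ He).2 //.
  rewrite /mtau; ring.
have ssq_ge0 : forall x, x \in V1 -> 0 <= ssq l2 a tau b x.
  move=> x Hx; rewrite /ssq (Hb _ Hx).2 ?(Hb _ Hx).1 //.
  have h1 := l2pos (x - b x).
  expandin Hl2 h1.
  rewrite (Hl2.1 (b x) x) in h1.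
  have h2 := (Hb _ Hx).2 (b x) (Hb _ Hx).1.
  rewrite /mtau in h2.
  have h3 := mulr_ge0 (ltW ht) (apos (b x)).
  lra.
have nsq_ge0 : forall q, q \in V2 -> 0 <= nsq l2 a tau b c d q.
  move=> q Hq; have He := (Hd q (inS2 q Hq)).1.
  rewrite nsqE //; apply: mulr_ge0; first exact: ltW ht.
  have h1 := apos (q - d q).
  expandin Ha h1.
  rewrite (Ha.1 (d q) q) in h1.
  have h2 := (Hd q (inS2 q Hq)).2 (d q) He.
  lra.

have step : forall n, (1 <= n)%N -> (n <= N - 1)%N ->
    energy l2 a tau b c d u1 u2 n = energy l2 a tau b c d u1 u2 n.-1.
  case=> [//|k] _ hk /=.
  have hk0 : (k <= N)%N by apply: (leq_trans _ (leq_trans hk (leq_subr 1 N))).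
  have hk1 : (k.+1 <= N)%N by apply: (leq_trans hk (leq_subr 1 N)).
  have hk2 : (k.+2 <= N)%N by move: hk HN; clear; lia.
  have Hp0 := Hu1 k hk0. have Hp1 := Hu1 _ hk1. have Hp2 := Hu1 _ hk2.
  have Hq0 := Hu2 k hk0. have Hq1 := Hu2 _ hk1. have Hq2 := Hu2 _ hk2.
  have zdef : forall j, (j <= N)%N ->
      b (u1 j) - c (u2 j) = b (u1 j + d (u2 j)) - d (u2 j).
    move=> j hj; have He := (Hd _ (inS2 _ (Hu2 j hj))).1.
    by rewrite bD ?Hu1 // cV2 ?Hu2 // opprB addrA.
  have VF3 : u1 k.+2 + u1 k = 2%:R *: (b (u1 k.+1) - c (u2 k.+1)).
    apply/eqP; rewrite -subr_eq0; apply/eqP; apply: uniq0.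
      rewrite rpredB ?rpredD ?rpredZ ?rpredB //.
        exact: (Hb _ Hp1).1.
      exact: (Hc _ (inS2 _ Hq1)).1.
    move=> v Hv; have h := Hs1 k.+1 erefl hk v Hv.
    rewrite /= in h.
    rewrite !(bilDl Hm, bilNl Hm, bilZl Hm) (Hb _ Hp1).2 // (Hc _ (inS2 _ Hq1)).2 //.
    rewrite /mtau; expandin Hl2 h; expandin Ha h; expand Hl2; expand Ha.
    lra.
  have z1 : b (u1 k.+1) - c (u2 k.+1) = 2^-1 *: (u1 k.+2 + u1 k).
    by rewrite VF3 scalerA mulVf ?scale1r // pnatr_eq0.
  have reshape : forall x y z w : V, x - y - z + w = (x - y) - (z - w).
    by move=> x y z w; rewrite [in RHS]opprB [in RHS]addrA addrAC.
  have Eq2 := Hs2 k.+1 erefl hk (u2 k.+2 - u2 k) (rpredB Hq2 Hq0).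
  rewrite /= in Eq2.
  have Ed := (fun j hj => (Hd _ (inS2 _ (Hu2 j hj))).2).
  have F00 := Ed k hk0 (u1 k) Hp0.
  have F02 := Ed k hk0 (u1 k.+2) Hp2.
  have F20 := Ed k.+2 hk2 (u1 k) Hp0.
  have F22 := Ed k.+2 hk2 (u1 k.+2) Hp2.
  have T00 := congr1 (fun x => tau ^+ 2 / 2 * x) F00.
  have T02 := congr1 (fun x => tau ^+ 2 / 2 * x) F02.
  have T20 := congr1 (fun x => tau ^+ 2 / 2 * x) F20.
  have T22 := congr1 (fun x => tau ^+ 2 / 2 * x) F22.
  have He0 := (Hd _ (inS2 _ Hq0)).1.
  have He2 := (Hd _ (inS2 _ Hq2)).1.
  have Hs0 : u1 k + d (u2 k) \in V1 by rewrite rpredD.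
  have Hs2' : u1 k.+2 + d (u2 k.+2) \in V1 by rewrite rpredD.
  have HB0 := (Hb _ Hs0).1.  have HB2 := (Hb _ Hs2').1.
  have R0 := (Hb _ Hs0).2.  have R2 := (Hb _ Hs2').2.
  have R00 := R0 _ Hp0. have R01 := R0 _ Hp2. have R02 := R0 _ He0.
  have R03 := R0 _ He2. have R04 := R0 _ HB0. have R05 := R0 _ HB2.
  have R20 := R2 _ Hp0. have R21 := R2 _ Hp2. have R22 := R2 _ He0.
  have R23 := R2 _ He2. have R24 := R2 _ HB0. have R25 := R2 _ HB2.
  clear R0 R2.
  rewrite /energy.
  have -> : Eterm5 l2 a tau b d u1 u2 k.+1 = Eterm3 l2 a tau b d u1 u2 k by [].
  have -> : Eterm6 l2 a tau b c d u2 k.+1 = Eterm4 l2 a tau b c d u2 k by [].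
  suff H : Eterm1 l2 a tau b c u1 u2 k.+1 + Eterm2 l2 a tau u2 k.+1
      + Eterm3 l2 a tau b d u1 u2 k.+1 + Eterm4 l2 a tau b c d u2 k.+1
      = Eterm1 l2 a tau b c u1 u2 k + Eterm2 l2 a tau u2 k
      + Eterm5 l2 a tau b d u1 u2 k + Eterm6 l2 a tau b c d u2 k.
    lra.
  rewrite /Eterm4 /Eterm6 !nsqE //.
  rewrite /Eterm1 /Eterm2 /Eterm3 /Eterm5 /ssq /=.
  rewrite (reshape (b (u1 k.+2))) (reshape (b (u1 k.+1))).
  rewrite (zdef k.+2 hk2) (zdef k hk0) z1.
  move: Eq2 T00 T02 T20 T22 R00 R01 R02 R03 R04 R05 R20 R21 R22 R23 R24 R25.
  set p0 := u1 k. set p2 := u1 k.+2. set q0 := u2 k. set q1 := u2 k.+1.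
  set q2 := u2 k.+2. set e0 := d q0. set e2 := d q2.
  set Bs0 := b (p0 + e0). set Bs2 := b (p2 + e2).
  rewrite /mtau.
  expand Hl2. expand Ha.
  rewrite ?(Hl2.1 p2 p0) ?(Ha.1 p2 p0) ?(Hl2.1 e0 p0) ?(Ha.1 e0 p0) ?(Hl2.1 e0 p2) ?(Ha.1 e0 p2) ?(Hl2.1 e2 p0) ?(Ha.1 e2 p0) ?(Hl2.1 e2 p2) ?(Ha.1 e2 p2) ?(Hl2.1 e2 e0) ?(Ha.1 e2 e0) ?(Hl2.1 Bs0 p0) ?(Ha.1 Bs0 p0) ?(Hl2.1 Bs0 p2) ?(Ha.1 Bs0 p2) ?(Hl2.1 Bs0 e0) ?(Ha.1 Bs0 e0) ?(Hl2.1 Bs0 e2) ?(Ha.1 Bs0 e2) ?(Hl2.1 Bs2 p0) ?(Ha.1 Bs2 p0) ?(Hl2.1 Bs2 p2) ?(Ha.1 Bs2 p2) ?(Hl2.1 Bs2 e0) ?(Ha.1 Bs2 e0) ?(Hl2.1 Bs2 e2) ?(Ha.1 Bs2 e2) ?(Hl2.1 Bs2 Bs0) ?(Ha.1 Bs2 Bs0) ?(Hl2.1 q0 p0) ?(Ha.1 q0 p0) ?(Hl2.1 q0 p2) ?(Ha.1 q0 p2) ?(Hl2.1 q0 e0) ?(Ha.1 q0 e0) ?(Hl2.1 q0 e2) ?(Ha.1 q0 e2) ?(Hl2.1 q0 Bs0) ?(Ha.1 q0 Bs0) ?(Hl2.1 q0 Bs2) ?(Ha.1 q0 Bs2) ?(Hl2.1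 q1 p0) ?(Ha.1 q1 p0) ?(Hl2.1 q1 p2) ?(Ha.1 q1 p2) ?(Hl2.1 q1 e0) ?(Ha.1 q1 e0) ?(Hl2.1 q1 e2) ?(Ha.1 q1 e2) ?(Hl2.1 q1 Bs0) ?(Ha.1 q1 Bs0) ?(Hl2.1 q1 Bs2) ?(Ha.1 q1 Bs2) ?(Hl2.1 q1 q0) ?(Ha.1 q1 q0) ?(Hl2.1 q2 p0) ?(Ha.1 q2 p0) ?(Hl2.1 q2 p2) ?(Ha.1 q2 p2) ?(Hl2.1 q2 e0) ?(Ha.1 q2 e0) ?(Hl2.1 q2 e2) ?(Ha.1 q2 e2) ?(Hl2.1 q2 Bs0) ?(Ha.1 q2 Bs0) ?(Hl2.1 q2 Bs2) ?(Ha.1 q2 Bs2) ?(Hl2.1 q2 q0) ?(Ha.1 q2 q0) ?(Hl2.1 q2 q1) ?(Ha.1 q2 q1).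
  move=> *.
  lra.
split; first exact: step.
move=> Hstab n hn E0.
have Econst : forall m, (m <= N - 1)%N ->
    energy l2 a tau b c d u1 u2 m = energy l2 a tau b c d u1 u2 0.
  elim=> [//|m IH] hm.
  by rewrite (step m.+1 erefl hm) /=; apply: IH; apply: ltnW.
have hn1 : (n.+1 <= N)%N by move: hn HN; clear; lia.
have hn0 : (n <= N)%N by move: hn HN; clear; lia.
have h1 := mpos (b (u1 n.+1) - c (u2 n.+1) - b (u1 n) + c (u2 n)).
have Hdl : u2 n.+1 - u2 n \in V2 by rewrite rpredB ?Hu2.
have h2 : 0 <= Eterm2 l2 a tau u2 n.
  rewrite /Eterm2 /=.
  have := ler_wpM2l (ltW ht) (Hstab _ Hdl).
  rewrite mulrA.
  have -> : tau ^+ 2 / 2 * (2 / tau ^+ 2) = 1.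
    field.
    by rewrite gt_eqF.
  rewrite mul1r => h; lra.
have h3 : 0 <= Eterm3 l2 a tau b d u1 u2 n.
  by apply: ssq_ge0; rewrite rpredD ?Hu1 ?(Hd _ (inS2 _ (Hu2 _ hn1))).1.
have h5 : 0 <= Eterm5 l2 a tau b d u1 u2 n.
  by apply: ssq_ge0; rewrite rpredD ?Hu1 ?(Hd _ (inS2 _ (Hu2 _ hn0))).1.
have h4 : 0 <= Eterm4 l2 a tau b c d u2 n by apply: nsq_ge0; apply: Hu2.
have h6 : 0 <= Eterm6 l2 a tau b c d u2 n by apply: nsq_ge0; apply: Hu2.
have h1' : 0 <= Eterm1 l2 a tau b c u1 u2 n by exact: h1.
have hE : E0 = energy l2 a tau b c d u1 u2 n by rewrite /E0 Econst.
move: hE; rewrite /energy => hE.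
by do !split; apply/andP; split; lra.
Qed.
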